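(* Suppose the jobs of an instance of $Pm||\sum w_jU_j$ are indexed so that $d_1\le d_2\le\dots\le d_n$, and consider a feasible solution in the discarding formulation: a set $S\subseteq J$ of scheduled jobs with a proper schedule $\sigma$ of $S$ in which every scheduled job $j$ satisfies $C_j(\sigma)\le d_j$, the cost being $\sum_{j\in J\setminus S}w_j$. Let $\sigma'$ be the intermediate schedule obtained from $\sigma$ by an admissible swap at some step $j^*\in S$ between machines $M_h$ and $M_i$. Then $\sigma'$ schedules the same set $S$ with every scheduled job completing by its due date; in particular $\sum w_jU_j(\sigma')\le\sum w_jU_j(\sigma)$.
   Context: Jobs $J=\{1,\dots,n\}$, job $j$ with positive integer processing time $p_j$, nonnegative integer weight $w_j$ and integer due date $d_j$; $m$ identical machines $M_1,\dots,M_m$; $p_{\max}=\max_{j\in J} p_j$, $P(X)=\sum_{j\in X}p_j$. In the discarding formulation of $Pm||\sum w_jU_j$, tardy jobs are discarded and incur penalty $w_j$: a solution schedules a subset $S$ of jobs, each completing by its due date, and $\sum w_jU_j$ equals the total weight of discarded jobs. A proper schedule $\sigma$ of $S$ is a partition $S=S_1(\sigma)\cup\dots\cup S_m(\sigma)$, the jobs of $S_i(\sigma)$ processed on $M_i$ consecutively from time $0$ without idle time in increasing index order; $C_j(\sigma)$ is the completion time of $j$. For $j\in S$ let $J_{i,j}(\sigma)=\{k\in S_i(\sigma):k\le j\}$ and $\Delta_{h,i,j}(\sigma)=P(J_{h,j}(\sigma))-P(J_{i,j}(\sigma))$. The swap: admissible for $\sigma$ at step $j^*$ with machines $M_h,M_i$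 if $j^*\in S_h(\sigma)$, $|S_i(\sigma)\setminus J_{i,j^*}(\sigma)|\ge 2p_{\max}$, and $\Delta_{h,i,j^*}(\sigma)\ge 4p_{\max}^2$. Let $J_I$ be the first (smallest-index) $2p_{\max}$ jobs of $S_i(\sigma)\setminus J_{i,j^*}(\sigma)$ and $J_H$ the last (largest-index) $2p_{\max}$ jobs of $J_{h,j^*}(\sigma)$; choose non-empty $J_{H'}\subseteq J_H$, $J_{I'}\subseteq J_I$ with $P(J_{H'})=P(J_{I'})$. The intermediate schedule $\sigma'$: on $M_h$ the time interval occupied by $J_H$ in $\sigma$ is filled by $J_H\setminus J_{H'}$ then $J_{I'}$; on $M_i$ the interval occupied by $J_I$ is filled by $J_{H'}$ then $J_I\setminus J_{I'}$ (each group in its order in $\sigma$); all other jobs keep their positions; no discarded job is scheduled. *)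

(* Defs.v *)
From HB Require Import structures.
From mathcomp Require Import all_boot all_order all_algebra.
Set Implicit Arguments. Unset Strict Implicit. Unset Printing Implicit Defensive.
Import Order.TTheory GRing.Theory Num.Theory.

(* Jobs are 'I_n (0-based indices, index order = the paper's index order),
   machines are 'I_m.  A schedule assigns to each machine the sequence of jobs
   it processes, consecutively from time 0 without idle time, in the order of
   the sequence. *)

Definition schedule (n m : nat) := 'I_m -> seq 'I_n.

Definition Psum n (p : 'I_n -> nat) (X : seq 'I_n) : nat := \sum_(x <- X) p x.

Definition pmax n (p : 'I_n -> nat) : nat := \max_(j < n) p j.

Definition comp_time n (p : 'I_n -> nat) (s : seq 'I_n) (j : 'I_n) : nat :=
  Psum p (take (index j s).+1 s).

Definition schedules n m (sigma : schedule n m) (S : {set 'I_n}) : Prop :=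
  forall j : 'I_n, \sum_(k < m) count_mem j (sigma k) = (j \in S : nat).

Definition proper_sched n m (sigma : schedule n m) (S : {set 'I_n}) : Prop :=
  schedules sigma S /\
  forall k : 'I_m, sorted (fun a b : 'I_n => (a < b)%N) (sigma k).

Definition on_time n m (p : 'I_n -> nat) (d : 'I_n -> int)
    (sigma : schedule n m) : Prop :=
  forall (k : 'I_m) (j : 'I_n), j \in sigma k ->
    ((comp_time p (sigma k) j)%:Z <= d j)%R.

Definition scheduled n m (sigma : schedule n m) : {set 'I_n} :=
  [set j | [exists k : 'I_m, j \in sigma k]].

Definition cost n (w : 'I_n -> nat) (S : {set 'I_n}) : nat :=
  \sum_(j in ~: S) w j.

Definition Jle n m (sigma : schedule n m) (k : 'I_m) (j : 'I_n) : seq 'I_n :=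
  [seq x <- sigma k | (nat_of_ord x <= j)%N].
Definition Jgt n m (sigma : schedule n m) (k : 'I_m) (j : 'I_n) : seq 'I_n :=
  [seq x <- sigma k | (j < nat_of_ord x)%N].

Definition Delta n m (p : 'I_n -> nat) (sigma : schedule n m)
    (h i : 'I_m) (j : 'I_n) : int :=
  ((Psum p (Jle sigma h j))%:Z - (Psum p (Jle sigma i j))%:Z)%R.

Definition admissible n m (p : 'I_n -> nat) (sigma : schedule n m)
    (jstar : 'I_n) (h i : 'I_m) : Prop :=
  [/\ jstar \in sigma h,
      (2 * pmax p <= size (Jgt sigma i jstar))%N &
      (((4 * pmax p ^ 2)%N)%:Z <= Delta p sigma h i jstar)%R].

Definition J_I n m (p : 'I_n -> nat) (sigma : schedule n m)
    (jstar : 'I_n) (i : 'I_m) : seq 'I_n :=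
  take (2 * pmax p) (Jgt sigma i jstar).
Definition J_I_after n m (p : 'I_n -> nat) (sigma : schedule n m)
    (jstar : 'I_n) (i : 'I_m) : seq 'I_n :=
  drop (2 * pmax p) (Jgt sigma i jstar).
Definition J_H n m (p : 'I_n -> nat) (sigma : schedule n m)
    (jstar : 'I_n) (h : 'I_m) : seq 'I_n :=
  drop (size (Jle sigma h jstar) - 2 * pmax p) (Jle sigma h jstar).
Definition J_H_before n m (p : 'I_n -> nat) (sigma : schedule n m)
    (jstar : 'I_n) (h : 'I_m) : seq 'I_n :=
  take (size (Jle sigma h jstar) - 2 * pmax p) (Jle sigma h jstar).

Definition swap_sched n m (p : 'I_n -> nat) (sigma : schedule n m)
    (jstar : 'I_n) (h i : 'I_m) (JH' JI' : {set 'I_n}) : schedule n m :=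
  fun k =>
    if k == h then
      J_H_before p sigma jstar h
      ++ [seq x <- J_H p sigma jstar h | x \notin JH']
      ++ [seq x <- J_I p sigma jstar i | x \in JI']
      ++ Jgt sigma h jstar
    else if k == i then
      Jle sigma i jstar
      ++ [seq x <- J_H p sigma jstar h | x \in JH']
      ++ [seq x <- J_I p sigma jstar i | x \notin JI']
      ++ J_I_after p sigma jstar i
    else sigma k.

(* Main.v *)
Require Import Defs.
From HB Require Import structures.
From mathcomp Require Import all_boot all_order all_algebra zify.
Import Order.TTheory GRing.Theory Num.Theory.
Set Implicit Arguments. Unset Strict Implicit.
Section S.
Variables (n : nat) (p : 'I_n -> nat).
Lemma Psum_cons y s: Psum p (y::s) = p y + Psum p s.
Proof. by rewrite /Psum big_cons. Qed.
Lemma Psum_cat a b: Psum p (a++b) = Psum p a + Psum p b.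
Proof. by rewrite /Psum big_cat. Qed.
Lemma Psum_nil : Psum p [::] = 0.
Proof. by rewrite /Psum big_nil. Qed.
Lemma comp_cons y s j: comp_time p (y::s) j = if y == j then p y else p y + comp_time p s j.
Proof.
rewrite /comp_time /=; case: eqP => _ /=; by rewrite ?take0 Psum_cons ?Psum_nil ?addn0.
Qed.
Lemma comp_le_Psum s j: comp_time p s j <= Psum p s.
Proof.
rewrite /comp_time; set k := (index j s).+1.
by rewrite -{2}(cat_take_drop k s) Psum_cat leq_addr.
Qed.
Lemma comp_cat_notin a b j: j \notin a -> comp_time p (a++b) j = Psum p a + comp_time p b j.
Proof.
elim: a => [|y a IH]; first by rewrite Psum_nil.
rewrite inE negb_or => /andP[Hy Ha] /=.
by rewrite !comp_cons eq_sym (negbTE Hy) IH // Psum_cons addnA.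
Qed.
Lemma comp_cat_in a b j: j \in a -> comp_time p (a++b) j = comp_time p a j.
Proof.
elim: a => [|y a IH] //.
rewrite inE /= !comp_cons; case: (boolP (y == j)) => //= Hne Ha.
rewrite IH //; move: Ha; case/orP => // /eqP Hj; by rewrite Hj eqxx in Hne.
Qed.
Lemma comp_filter (P : pred 'I_n) s j: P j -> comp_time p (filter P s) j <= comp_time p s j.
Proof.
move=> Pj; elim: s => [|y s IH] //=.
case: (boolP (y == j)) => [/eqP ->|Hne]; first by rewrite Pj !comp_cons eqxx.
case: (P y); rewrite !comp_cons (negbTE Hne) //; first by rewrite leq_add2l.
exact: leq_trans IH (leq_addl _ _).
Qed.
Lemma ltrans : transitive (fun a b : 'I_n => (a < b)%N).
Proof. move=> x y z; exact: ltn_trans. Qed.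
Lemma comp_ge_sorted s j: sorted (fun a b : 'I_n => (a < b)%N) s -> j \in s ->
  Psum p [seq x <- s | (nat_of_ord x <= j)%N] <= comp_time p s j.
Proof.
elim: s => [|y s IH] //= Hs.
have Hall := order_path_min ltrans Hs.
rewrite inE comp_cons; case: (boolP (y == j)) => [/eqP Hyj|Hne] /= Hj.
  subst j; rewrite leqnn Psum_cons.
  suff -> : [seq x <- s | (nat_of_ord x <= y)%N] = [::] by rewrite Psum_nil addn0.
  apply/eqP; rewrite -[_ == _]negbK -has_filter; apply/hasPn => x Hx /=.
  by rewrite -ltnNge; move/allP: Hall => /(_ x Hx).
have Hs' := path_sorted Hs.
have {}Hj : j \in s by move: Hj; rewrite eq_sym (negbTE Hne).
case: ifP => _; rewrite ?Psum_cons ?leq_add2l; last exact: leq_trans (IH Hs' Hj) (leq_addl _ _).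
exact: IH.
Qed.
Lemma sorted_split s j: sorted (fun a b : 'I_n => (a < b)%N) s ->
  s = [seq x <- s | (nat_of_ord x <= j)%N] ++ [seq x <- s | (j < nat_of_ord x)%N].
Proof.
elim: s => [|y s IH] //= Hs.
have Hall := order_path_min ltrans Hs.
have Hs' := path_sorted Hs.
case: leqP => Hy /=; first by rewrite -IH.
have -> : [seq x <- s | (nat_of_ord x <= j)%N] = [::].
  apply/eqP; rewrite -[_ == _]negbK -has_filter; apply/hasPn => x Hx /=.
  rewrite -ltnNge; move/allP: Hall => /(_ x Hx) /= H; exact: ltn_trans H.
rewrite /=; congr (_ :: _); apply/esym/all_filterP/allP => x Hx.
move/allP: Hall => /(_ x Hx) /= H; exact: ltn_trans H.
Qed.
Lemma Psum_le_size s: Psum p s <= size s * pmax p.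
Proof.
elim: s => [|y s IH]; first by rewrite Psum_nil.
rewrite Psum_cons /= mulSn leq_add //.
rewrite /pmax; exact: (@leq_bigmax _ p y).
Qed.
Lemma Psum_filter_set (A : {set 'I_n}) s: uniq s -> {subset A <= s} ->
  Psum p [seq x <- s | x \in A] = \sum_(x in A) p x.
Proof.
move=> Hu Hsub; rewrite /Psum -[RHS]big_enum.
apply: perm_big; apply: uniq_perm; [exact: filter_uniq|exact: enum_uniq|].
move=> x; rewrite mem_filter mem_enum; case Hx: (x \in A) => //=.
exact: Hsub.
Qed.
Lemma Psum_filter_split (P : pred 'I_n) s :
  Psum p [seq x <- s | P x] + Psum p [seq x <- s | ~~ P x] = Psum p s.
Proof.
elim: s => [|y s IH]; first by rewrite Psum_nil.
rewrite /=; case: (P y) => /=; rewrite !Psum_cons -IH; lia.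
Qed.
Lemma count_filter_split (a P : pred 'I_n) s :
  count a [seq x <- s | P x] + count a [seq x <- s | ~~ P x] = count a s.
Proof.
elim: s => [|y s IH] //=.
case: (P y) => /=; rewrite -IH; lia.
Qed.
End S.
Lemma uniq_cat_notin (T : eqType) (a b : seq T) x : uniq (a ++ b) -> x \in b -> x \notin a.
Proof. by rewrite cat_uniq => /and3P[_ /hasPn H _] /H. Qed.

Lemma scheduled_eq n m (sig : schedule n m) S : schedules sig S -> scheduled sig = S.
Proof.
move=> H; apply/setP => j; rewrite inE; have := H j.
case: (boolP (j \in S)) => jS /= E.
  case: (boolP [exists k, j \in sig k]) => //; rewrite negb_exists => /forallP H0.
  move: E; rewrite big1 // => k _; apply/count_memPn; exact: H0.
apply: negbTE; apply/existsP => -[k Hk].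
have : 0 < count_mem j (sig k) by rewrite -has_count has_pred1.
move: E; rewrite (bigD1 k) //= => /eqP; rewrite addn_eq0 => /andP[/eqP ->] //.
Qed.

Lemma sum2 m (F G : 'I_m -> nat) h i : h != i ->
  (forall k, k != h -> k != i -> F k = G k) -> F h + F i = G h + G i ->
  \sum_(k < m) F k = \sum_(k < m) G k.
Proof.
move=> Hhi Hfg E.
have Hih : i != h by rewrite eq_sym.
rewrite (bigD1 h) //= (bigD1 i) ?Hih //=.
symmetry; rewrite (bigD1 h) //= (bigD1 i) ?Hih //=.
rewrite (eq_bigr F) ?addnA ?E //.
by move=> k /andP[H1 H2]; rewrite Hfg.
Qed.
Ltac revprops := repeat match goal with H : ?T |- _ =>
   match type of T with Prop => revert H end end.
Ltac norm p sigma jstar h i JH' JI' j :=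
  revprops;
  try set a1 := Psum p [seq x <- J_H p sigma jstar h | x \in JH'];
  try set a2 := Psum p [seq x <- J_H p sigma jstar h | x \notin JH'];
  try set b1 := Psum p [seq x <- J_I p sigma jstar i | x \in JI'];
  try set b2 := Psum p [seq x <- J_I p sigma jstar i | x \notin JI'];
  try set c1 := comp_time p [seq x <- J_H p sigma jstar h | x \in JH'] j;
  try set c2 := comp_time p [seq x <- J_H p sigma jstar h | x \notin JH'] j;
  try set e1 := comp_time p [seq x <- J_I p sigma jstar i | x \in JI'] j;
  try set e2 := comp_time p [seq x <- J_I p sigma jstar i | x \notin JI'] j;
  try set sA := \sum_(x in JH') p x;
  try set sB := \sum_(x in JI') p x;
  intros.

Unset Implicit Arguments.

Theorem lemma8 (n m : nat) (p : 'I_n -> nat) (w : 'I_n -> nat)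
  (d : 'I_n -> int)
  (p_pos : forall j : 'I_n, (0 < p j)%N)
  (d_sorted : forall j1 j2 : 'I_n, (j1 <= j2)%N -> (d j1 <= d j2)%R)
  (S : {set 'I_n}) (sigma : schedule n m)
  (Hproper : proper_sched sigma S)
  (Hdue : on_time p d sigma)
  (jstar : 'I_n) (h i : 'I_m)
  (Hadm : admissible p sigma jstar h i)
  (JH' JI' : {set 'I_n})
  (HJH'sub : JH' \subset [set x | x \in J_H p sigma jstar h])
  (HJI'sub : JI' \subset [set x | x \in J_I p sigma jstar i])
  (HJH'ne : JH' != set0) (HJI'ne : JI' != set0)
  (HPeq : \sum_(x in JH') p x = \sum_(x in JI') p x) :
  let sigma' := swap_sched p sigma jstar h i JH' JI' in
  [/\ schedules sigma' S,
      on_time p d sigma' &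
      (cost w (scheduled sigma') <= cost w (scheduled sigma))%N].
Proof.
move=> sigma'.
case: Hproper => Hsch Hsort; case: Hadm => Hjh _ HDelta.
have Huniq k : uniq (sigma k).
  apply: (sorted_uniq (@ltrans n)) (Hsort k); move=> x; exact: ltnn.
have Hsplit k : sigma k = Jle sigma k jstar ++ Jgt sigma k jstar by exact: sorted_split.
have Hpm : 1 <= pmax p.
  apply: leq_trans (p_pos jstar) _; rewrite /pmax; exact: (@leq_bigmax _ p jstar).
have Hhi : h != i.
  apply/eqP => Ehi; move: HDelta; rewrite /Delta Ehi; (timeout 15 lia).
have HDn : 4 * (pmax p * pmax p) + Psum p (Jle sigma i jstar) <= Psum p (Jle sigma h jstar).
  move: HDelta; rewrite /Delta; (timeout 15 lia).
have Hcstar := Hdue h jstar Hjh.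
have Hcge : Psum p (Jle sigma h jstar) <= comp_time p (sigma h) jstar.
  rewrite /Jle; exact: comp_ge_sorted.
have HLh : Jle sigma h jstar = J_H_before p sigma jstar h ++ J_H p sigma jstar h.
  by rewrite cat_take_drop.
have HGi : Jgt sigma i jstar = J_I p sigma jstar i ++ J_I_after p sigma jstar i.
  by rewrite cat_take_drop.
have ULh : uniq (Jle sigma h jstar) by rewrite filter_uniq.
have UGi : uniq (Jgt sigma i jstar) by rewrite filter_uniq.
have UJH : uniq (J_H p sigma jstar h) by rewrite drop_uniq.
have UJI : uniq (J_I p sigma jstar i) by rewrite take_uniq.
have PJH : Psum p (J_H p sigma jstar h) <= 2 * pmax p * pmax p.
  apply: leq_trans (Psum_le_size _ _) _; rewrite leq_mul2r size_drop; apply/orP; right; (timeout 15 lia).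
have PJI : Psum p (J_I p sigma jstar i) <= 2 * pmax p * pmax p.
  apply: leq_trans (Psum_le_size _ _) _; rewrite leq_mul2r size_take; apply/orP; right.
  case: ifP => //; (timeout 15 lia).
have SJH : Psum p [seq x <- J_H p sigma jstar h | x \in JH'] = \sum_(x in JH') p x.
  apply: Psum_filter_set => // x Hx; move/subsetP: HJH'sub => /(_ x Hx); by rewrite inE.
have SJI : Psum p [seq x <- J_I p sigma jstar i | x \in JI'] = \sum_(x in JI') p x.
  apply: Psum_filter_set => // x Hx; move/subsetP: HJI'sub => /(_ x Hx); by rewrite inE.
have SpH := Psum_filter_split p (fun x => x \in JH') (J_H p sigma jstar h).
have SpI := Psum_filter_split p (fun x => x \in JI') (J_I p sigma jstar i).
have HLhP : Psum p (Jle sigma h jstar) = Psum p (J_H_before p sigma jstar h) + Psum p (J_H p sigma jstar h).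
  by rewrite {1}HLh Psum_cat.
have HHsig : sigma h = J_H_before p sigma jstar h ++ (J_H p sigma jstar h ++ Jgt sigma h jstar).
  by rewrite catA -HLh -Hsplit.
have HIsig : sigma i = Jle sigma i jstar ++ (J_I p sigma jstar i ++ J_I_after p sigma jstar i).
  by rewrite -HGi -Hsplit.
have dj (x : 'I_n) : jstar < x -> (d jstar <= d x)%R by move=> H; apply: d_sorted; exact: ltnW.
have Hs' : schedules sigma' S.
  move=> j; rewrite -(Hsch j).
  have Hhi2 := Hhi; apply: sum2 Hhi2 _ _.
    move=> k Hk1 Hk2; by rewrite /sigma' /swap_sched (negbTE Hk1) (negbTE Hk2).
  rewrite /sigma' /swap_sched eqxx eq_sym (negbTE Hhi) eqxx.
  rewrite {1}HHsig {1}HIsig !count_cat.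
  have C1 : count_mem j [seq x <- J_H p sigma jstar h | x \in JH'] + count_mem j [seq x <- J_H p sigma jstar h | x \notin JH'] = count_mem j (J_H p sigma jstar h).
    exact: count_filter_split.
  have C2 : count_mem j [seq x <- J_I p sigma jstar i | x \in JI'] + count_mem j [seq x <- J_I p sigma jstar i | x \notin JI'] = count_mem j (J_I p sigma jstar i).
    exact: count_filter_split.
  clear -C1 C2; (timeout 15 lia).
split => //.
-
  move=> k j; rewrite /sigma' /swap_sched.
  case: eqP => [_|Hkh].
  + rewrite !mem_cat.
    case: (boolP (j \in J_H_before p sigma jstar h)) => [jHb _|nHb /= Hj].
      rewrite comp_cat_in //.
      have := Hdue h j; rewrite {1}HHsig mem_cat jHb => /(_ isT).
      by rewrite HHsig comp_cat_in.
    rewrite comp_cat_notin //.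
    case: (boolP (j \in [seq x <- J_H p sigma jstar h | x \notin JH'])) => [jf1|nf1].
      rewrite comp_cat_in //.
      have jJH : j \in J_H p sigma jstar h by move: jf1; rewrite mem_filter => /andP[].
      have Pj : (fun x => x \notin JH') j by move: jf1; rewrite mem_filter => /andP[].
      have := Hdue h j; rewrite {1}HHsig !mem_cat jJH orbT => /(_ isT).
      rewrite HHsig comp_cat_notin // comp_cat_in //.
      have := @comp_filter n p (fun x => x \notin JH') (J_H p sigma jstar h) j Pj; move=> HA HB; apply: le_trans HB; rewrite lez_nat leq_add2l; exact: HA.
    move: Hj; rewrite (negbTE nf1) /= => Hj.
    rewrite comp_cat_notin //.
    case: (boolP (j \in [seq x <- J_I p sigma jstar i | x \in JI'])) => [jf2|nf2].
      rewrite comp_cat_in //.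
      have jJI : j \in J_I p sigma jstar i by move: jf2; rewrite mem_filter => /andP[].
      have jGi : j \in Jgt sigma i jstar by rewrite HGi mem_cat jJI.
      have ltj : jstar < j by move: jGi; rewrite mem_filter => /andP[].
      have := dj j ltj.
      have := comp_le_Psum p [seq x <- J_I p sigma jstar i | x \in JI'] j.
      move=> HA HB; apply: le_trans HB; apply: le_trans Hcstar; rewrite lez_nat; clear -HA SpH SJH SJI HPeq HLhP Hcge; norm p sigma jstar h i JH' JI' j; lia.
    move: Hj; rewrite (negbTE nf2) /= => Hj.
    rewrite comp_cat_notin //.
    have ltj : jstar < j by move: Hj; rewrite mem_filter => /andP[].
    have nLh : j \notin Jle sigma h jstar by rewrite mem_filter leqNgt ltj.
    have := Hdue h j; rewrite {1}(Hsplit h) mem_cat Hj orbT => /(_ isT).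
    rewrite (Hsplit h) comp_cat_notin //.
    move=> HA; apply: le_trans HA; rewrite lez_nat; clear -SpH SJH SJI HPeq HLhP; norm p sigma jstar h i JH' JI' j; lia.
  + case: eqP => [_|Hki]; last exact: Hdue.
    rewrite !mem_cat.
    case: (boolP (j \in Jle sigma i jstar)) => [jLi _|nLi /= Hj].
      rewrite comp_cat_in //.
      have := Hdue i j; rewrite {1}(Hsplit i) mem_cat jLi => /(_ isT).
      by rewrite (Hsplit i) comp_cat_in.
    rewrite comp_cat_notin //.
    case: (boolP (j \in [seq x <- J_H p sigma jstar h | x \in JH'])) => [jg1|ng1].
      rewrite comp_cat_in //.
      have jJH : j \in J_H p sigma jstar h by move: jg1; rewrite mem_filter => /andP[].
      have nHb : j \notin J_H_before p sigma jstar h.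
        by apply: uniq_cat_notin jJH; rewrite -HLh.
      have := Hdue h j; rewrite {1}HHsig !mem_cat jJH orbT => /(_ isT).
      rewrite HHsig comp_cat_notin //.
      have := comp_le_Psum p [seq x <- J_H p sigma jstar h | x \in JH'] j.
      move=> HA HB; apply: le_trans HB; rewrite lez_nat; clear -HA SpH SJH HPeq PJH HDn HLhP; norm p sigma jstar h i JH' JI' j; lia.
    move: Hj; rewrite (negbTE ng1) /= => Hj.
    rewrite comp_cat_notin //.
    case: (boolP (j \in [seq x <- J_I p sigma jstar i | x \notin JI'])) => [jg2|ng2].
      rewrite comp_cat_in //.
      have jJI : j \in J_I p sigma jstar i by move: jg2; rewrite mem_filter => /andP[].
      have jGi : j \in Jgt sigma i jstar by rewrite HGi mem_cat jJI.
      have ltj : jstar < j by move: jGi; rewrite mem_filter => /andP[].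
      have := dj j ltj.
      have := comp_le_Psum p [seq x <- J_I p sigma jstar i | x \notin JI'] j.
      move=> HA HB; apply: le_trans HB; apply: le_trans Hcstar; rewrite lez_nat; clear -HA SpH SpI PJH PJI HDn Hcge; norm p sigma jstar h i JH' JI' j; lia.
    move: Hj; rewrite (negbTE ng2) /= => Hj.
    rewrite comp_cat_notin //.
    have nJI : j \notin J_I p sigma jstar i by apply: uniq_cat_notin Hj; rewrite -HGi.
    have := Hdue i j; rewrite {1}HIsig !mem_cat Hj !orbT => /(_ isT).
    rewrite HIsig comp_cat_notin // comp_cat_notin //.
    move=> HA; apply: le_trans HA; rewrite lez_nat; clear -SpI SJH SJI HPeq; norm p sigma jstar h i JH' JI' j; lia.
-
  by rewrite (scheduled_eq Hs') (scheduled_eq Hsch).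
Qed.
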